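(* Let $p_1,\dots,p_d\in(0,1)$ with $p_i\neq\frac12$ for all $i$, and let $\mu(X)=\prod_{i:x_i=1}p_i\prod_{i:x_i=0}(1-p_i)$ for $X\in Q_d$. Then this distribution has an equilibrium.
   Context: $Q_d=\{0,1\}^d$ with the Hamming distance $d(X,Y)=|\{i: x_i\neq y_i\}|$. For a probability distribution $\mu$ on $Q_d$ (extended additively to subsets), and $A,B\in Q_d$, let $V(A,B)=\{X: d(X,A)<d(X,B)\}$, $T(A,B)=\{X: d(X,A)=d(X,B)\}$, $P_1(A,B)=\mu(V(A,B))+\frac12\mu(T(A,B))$, $P_2(A,B)=\mu(V(B,A))+\frac12\mu(T(A,B))$. $(A,B)$ is an equilibrium if $P_1(A,B)\ge P_1(A',B)$ for all $A'\in Q_d$ and $P_2(A,B)\ge P_2(A,B')$ for all $B'\in Q_d$. *)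

(* Defs.v *)
From HB Require Import structures.
From mathcomp Require Import all_boot all_order all_algebra.
Set Implicit Arguments. Unset Strict Implicit. Unset Printing Implicit Defensive.
Import Order.TTheory GRing.Theory Num.Theory.
Local Open Scope ring_scope.

Definition cube (d : nat) := {ffun 'I_d -> bool}.

Definition hamming d (X Y : cube d) : nat := #|[set i | X i != Y i]|.

Definition meas (R : numDomainType) d (mu : cube d -> R) (S : {set cube d}) : R :=
  \sum_(X in S) mu X.

Definition Vor d (A B : cube d) : {set cube d} :=
  [set X | hamming X A < hamming X B]%N.
Definition Tie d (A B : cube d) : {set cube d} :=
  [set X | hamming X A == hamming X B].

Definition payoff1 (R : numFieldType) d (mu : cube d -> R) (A B : cube d) : R :=
  meas mu (Vor A B) + meas mu (Tie A B) / 2.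
Definition payoff2 (R : numFieldType) d (mu : cube d -> R) (A B : cube d) : R :=
  meas mu (Vor B A) + meas mu (Tie A B) / 2.

Definition equilibrium (R : numFieldType) d (mu : cube d -> R) (A B : cube d) : Prop :=
  (forall A' : cube d, payoff1 mu A' B <= payoff1 mu A B) /\
  (forall B' : cube d, payoff2 mu A B' <= payoff2 mu A B).

Definition prod_dist (R : numFieldType) d (p : 'I_d -> R) (X : cube d) : R :=
  \prod_(i < d) (if X i then p i else 1 - p i).

(* Main.v *)
Require Import Defs.
From HB Require Import structures.
From mathcomp Require Import all_boot all_order all_algebra.
From mathcomp Require Import zify ring lra.
Import Order.TTheory GRing.Theory Num.Theory.
Local Open Scope ring_scope.
Set Implicit Arguments. Unset Strict Implicit. Unset Printing Implicit Defensive.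

Section Aux.
Variable R : realFieldType.

Definition w (x : R) (b : bool) := if b then x else 1 - x.
Definition tl d (X : cube d.+1) : cube d := [ffun i => X (lift ord0 i)].
Definition cns d (b : bool) (Y : cube d) : cube d.+1 :=
  [ffun i => if unlift ord0 i is Some j then Y j else b].

Lemma cns_ord0 d b (Y : cube d) : cns b Y ord0 = b.
Proof. by rewrite ffunE unlift_none. Qed.
Lemma tl_cns d b (Y : cube d) : tl (cns b Y) = Y.
Proof. by apply/ffunP => i; rewrite !ffunE liftK. Qed.
Lemma cns_tl d (X : cube d.+1) : cns (X ord0) (tl X) = X.
Proof. by apply/ffunP => i; rewrite ffunE; case: unliftP => [j ->|->]; rewrite ?ffunE. Qed.

Lemma sum_cube d (F : cube d.+1 -> R) :
  \sum_(X : cube d.+1) F X = \sum_(b : bool) \sum_(Y : cube d) F (cns b Y).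
Proof.
rewrite pair_big /=.
rewrite (reindex (fun u : bool * cube d => cns u.1 u.2)) //.
exists (fun X : cube d.+1 => (X ord0, tl X)) => [[b Y] _ | X _]; by rewrite /= ?cns_ord0 ?tl_cns ?cns_tl.
Qed.

Lemma hamE d (X Y : cube d) : hamming X Y = (\sum_i (X i != Y i))%N.
Proof.
rewrite /hamming -sum1_card big_mkcond /=; apply eq_bigr => i _.
by rewrite inE; case: (_ != _).
Qed.

Lemma ham_split d (X Y : cube d.+1) :
  hamming X Y = ((X ord0 != Y ord0) + hamming (tl X) (tl Y))%N.
Proof.
rewrite !hamE big_ord_recl; congr (_ + _)%N; apply eq_bigr => i _.
by rewrite !ffunE.
Qed.

Lemma pd_split d (p : 'I_d.+1 -> R) (X : cube d.+1) :
  prod_dist p X = w (p ord0) (X ord0) * prod_dist (fun i => p (lift ord0 i)) (tl X).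
Proof.
rewrite /prod_dist big_ord_recl; congr (_ * _); apply eq_bigr => i _.
by rewrite ffunE.
Qed.

Lemma pd_ge0 d (p : 'I_d -> R) X : (forall i, 0 <= p i <= 1) -> 0 <= prod_dist p X.
Proof.
move=> hp; apply: prodr_ge0 => i _; case: (X i); have /andP[] := hp i => *; lra.
Qed.

Definition Dz d (A M X : cube d) : int := (hamming X A)%:Z - (hamming X M)%:Z.

Lemma step (E : (int -> R) -> R) (a b : R) (dt df : int) (g : int -> R) :
  (forall h1 h2, (forall z, h1 z <= h2 z) -> E h1 <= E h2) ->
  (forall h, {homo h : x y / (x <= y)%R} -> E (fun z => h (- z)) <= E h) ->
  {homo g : x y / (x <= y)%R} -> 0 <= a -> 0 <= b ->
  ((dt = 0 /\ df = 0) \/ (dt = 1 /\ df = -1 /\ b <= a) \/ (dt = -1 /\ df = 1 /\ a <= b)) ->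
  a * E (fun z => g (-(dt+z))) + b * E (fun z => g (-(df+z)))
    <= a * E (fun z => g (dt+z)) + b * E (fun z => g (df+z)).
Proof.
move=> mono IH hg ha hb hd.
have ext h1 h2 : (forall z, h1 z = h2 z) -> E h1 = E h2.
  by move=> e; apply/le_anti; rewrite !mono // => z; rewrite e.
have H1 c : E (fun z => g (-(c+z))) <= E (fun z => g (-c + z)).
  rewrite (ext _ (fun z => (fun y => g (-c + y)) (-z))); last by move=> z; rewrite opprD.
  by apply: IH => x y hxy; apply: hg; rewrite lerD2l.
have H2 c c' : (c <= c')%R -> E (fun z => g (c+z)) <= E (fun z => g (c'+z)).
  by move=> hc; apply: mono => z; apply: hg; rewrite lerD2r.
have H3 c c' : (c' <= c)%R -> E (fun z => g (-(c+z))) <= E (fun z => g (-(c'+z))).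
  by move=> hc; apply: mono => z; apply: hg; rewrite lerN2 lerD2r.
case: hd => [[-> ->]|[[-> [-> hab]]|[-> [-> hab]]]].
- have h := H1 0; rewrite oppr0 in h; by apply: lerD; apply: ler_wpM2l.
- have h1 := H1 1; have h2 := H1 (-1); rewrite opprK in h2.
  have h3 := H3 1 (-1) isT.
  set X1 := E _ in h1 h3 *; set X2 := E (fun z => g (- (-1 + z))) in h2 h3 *.
  set P := E _ in h1 *; set Q := E _ in h2 *.
  have k1 : 0 <= (a - b) * (X2 - X1) by apply: mulr_ge0; lra.
  have k2 : 0 <= a * (Q - X2) by apply: mulr_ge0; lra.
  have k3 : 0 <= b * (P - X1) by apply: mulr_ge0; lra.
  nra.
- have h1 := H1 (-1); rewrite opprK in h1; have h2 := H1 1.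
  have h3 := H3 1 (-1) isT.
  set X1 := E (fun z => g (- (-1 + z))) in h1 h3 *; set X2 := E (fun z => g (- (1 + z))) in h2 h3 *.
  set P := E (fun z => g (1 + z)) in h1 *; set Q := E (fun z => g (-1 + z)) in h2 *.
  have k1 : 0 <= (b - a) * (X1 - X2) by apply: mulr_ge0; lra.
  have k2 : 0 <= a * (Q - X2) by apply: mulr_ge0; lra.
  have k3 : 0 <= b * (P - X1) by apply: mulr_ge0; lra.
  nra.
Qed.


Lemma split_term d (p : 'I_d.+1 -> R) (A M : cube d.+1) (h : int -> R) b :
  \sum_(Y : cube d) prod_dist p (cns b Y) * h (Dz A M (cns b Y)) =
  w (p ord0) b * \sum_(Y : cube d) prod_dist (fun i => p (lift ord0 i)) Y *
     h (((b != A ord0)%:Z - (b != M ord0)%:Z) + Dz (tl A) (tl M) Y).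
Proof.
rewrite mulr_sumr; apply eq_bigr => Y _.
rewrite pd_split /Dz !(ham_split (cns b Y)) cns_ord0 tl_cns mulrA; congr (_ * h _).
rewrite !PoszD; ring.
Qed.

Lemma key d : forall (p : 'I_d -> R) (A M : cube d) (g : int -> R),
  (forall i, 0 <= p i <= 1) -> (forall i, 1/2 <= w (p i) (M i)) ->
  {homo g : x y / (x <= y)%R} ->
  \sum_X prod_dist p X * g (- Dz A M X) <= \sum_X prod_dist p X * g (Dz A M X).
Proof.
elim: d => [|d IH] p A M g hp hM hg.
  apply: ler_sum => X _.
  have -> : Dz A M X = 0 by rewrite /Dz !hamE !big_ord0.
  by rewrite oppr0.
rewrite !sum_cube !big_bool /=.
rewrite !(split_term p A M (fun z => g (- z))) !(split_term p A M g).
set p' := fun i => p (lift ord0 i).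
pose E := fun h : int -> R => \sum_(Y : cube d) prod_dist p' Y * h (Dz (tl A) (tl M) Y).
have hp' : forall i, 0 <= p' i <= 1 by move=> i; apply: hp.
have hM' : forall i, 1/2 <= w (p' i) (tl M i) by move=> i; rewrite ffunE; apply: hM.
apply: (@step E _ _ _ _ g).
- move=> h1 h2 hh; apply: ler_sum => Y _; apply: ler_wpM2l; first exact: pd_ge0.
  exact: hh.
- by move=> h hh; apply: IH.
- exact: hg.
- by have /andP[] := hp ord0.
- by have /andP[] := hp ord0; rewrite /w; lra.
- have := hM ord0; rewrite /w.
  case: (A ord0); case: (M ord0) => /= hm.
  + by left.
  + by right; right; split => //; split => //; lra.
  + by right; left; split => //; split => //; lra.
  + by left.
Qed.

End Aux.

Lemma meas_ind (R : realFieldType) d (mu : cube d -> R) (S : {set cube d}) :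
  meas mu S = \sum_X mu X * (X \in S)%:R.
Proof.
rewrite /meas big_mkcond /=; apply eq_bigr => X _.
by case: (X \in S); rewrite ?mulr1 ?mulr0.
Qed.

Lemma cmp (R : realFieldType) d (p : 'I_d -> R) (A M : cube d) :
  (forall i, 0 <= p i <= 1) -> (forall i, 1/2 <= w (p i) (M i)) ->
  meas (prod_dist p) (Vor A M) <= meas (prod_dist p) (Vor M A).
Proof.
move=> hp hM.
have hg : {homo (fun z : int => ((0 < z)%R)%:R : R) : x y / (x <= y)%R}.
  move=> x y hxy /=; case h: (0 < x)%R; last by rewrite ler0n.
  by rewrite (lt_le_trans h hxy).
have := key A hp hM hg.
rewrite !meas_ind.
have -> : \sum_X prod_dist p X * ((X \in Vor A M))%:R =
          \sum_X prod_dist p X * ((0 < - Dz A M X)%R)%:R.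
  by apply eq_bigr => X _; rewrite inE /Dz opprB subr_gt0 ltz_nat.
have -> // : \sum_X prod_dist p X * ((X \in Vor M A))%:R =
          \sum_X prod_dist p X * ((0 < Dz A M X)%R)%:R.
by apply eq_bigr => X _; rewrite inE /Dz subr_gt0 ltz_nat.
Qed.

Lemma bound (R : realFieldType) d (p : 'I_d -> R) (A M : cube d) (T : {set cube d}) :
  (forall i, 0 <= p i <= 1) -> (forall i, 1/2 <= w (p i) (M i)) ->
  (forall X, (X \in T) = (hamming X A == hamming X M)) ->
  meas (prod_dist p) (Vor A M) + meas (prod_dist p) T / 2 <=
  meas (prod_dist p) (Vor M M) + meas (prod_dist p) (Tie M M) / 2.
Proof.
move=> hp hM hT.
have hc := cmp A hp hM.
have e1 : meas (prod_dist p) (Vor M M) = 0.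
  rewrite meas_ind big1 // => X _; by rewrite inE ltnn mulr0.
have e2 : meas (prod_dist p) (Tie M M) =
   meas (prod_dist p) (Vor A M) + meas (prod_dist p) (Vor M A) + meas (prod_dist p) T.
  rewrite !meas_ind -!big_split /=; apply eq_bigr => X _.
  rewrite -!mulrDr hT !inE eqxx; congr (_ * _).
  by case: (ltngtP (hamming X A) (hamming X M)) => _ /=; rewrite ?addr0 ?add0r.
rewrite e1 e2 add0r; lra.
Qed.

Theorem mainTheorem8 (R : realFieldType) (d : nat) (p : 'I_d -> R) :
  (forall i, 0 < p i < 1) ->
  (forall i, p i != 1 / 2) ->
  exists A B : cube d, equilibrium (prod_dist p) A B.
Proof.
move=> hp _.
have hp' : forall i, 0 <= p i <= 1.
  by move=> i; have /andP[h1 h2] := hp i; rewrite !ltW.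
pose M : cube d := [ffun i => 1/2 < p i].
have hM : forall i, 1/2 <= w (p i) (M i).
  move=> i; rewrite /w ffunE; case: ltP => h; lra.
exists M, M; split.
- move=> A'; rewrite /payoff1; apply: bound => // X; by rewrite inE.
- move=> B'; rewrite /payoff2; apply: bound => // X; by rewrite inE eq_sym.
Qed.
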